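(* Let $\mathfrak{S}=(\mathcal{X},\mathsf{S},\gamma,(\Lambda_{a})_{a\in\mathcal{A}})$ be a spectral decomposition system for the Euclidean space $\mathfrak{H}$ and let $\varphi\in\Gamma_0(\mathcal{X})$ be $\mathsf{S}$-invariant. Then: (i) $\varphi\circ\gamma$ is essentially smooth if and only if $\varphi$ is essentially smooth; (ii) $\varphi\circ\gamma$ is essentially strictly convex if and only if $\varphi$ is essentially strictly convex; (iii) $\varphi\circ\gamma$ is a Legendre function if and only if $\varphi$ is a Legendre function.
   Context: A Euclidean space is a finite-dimensional real inner product space; inner products are written $\langle\cdot,\cdot\rangle$ and norms $\|\cdot\|$. Let $\mathfrak{H}$ and $\mathcal{X}$ be Euclidean spaces, let $\mathsf{S}$ be a group acting on $\mathcal{X}$ by linear isometries, let $\gamma\colon\mathfrak{H}\to\mathcal{X}$, and let $(\Lambda_a)_{a\in\mathcal{A}}$ be a family of linear operators from $\mathcal{X}$ to $\mathfrak{H}$. The orbit of $x$ is $\mathsf{S}\cdot x=\{s\cdot x: s\in\mathsf{S}\}$; a map $f$ on $\mathcal{X}$ is $\mathsf{S}$-invariant if $f(s\cdot x)=f(x)$ for all $s,x$. The tuple is a spectral decomposition system for $\mathfrak{H}$ if: [A] every $\Lambda_a$ is an isometry; [B] there exists an $\mathsf{S}$-invariant $\tau\colon\mathcal{X}\to\mathcal{X}$ with $\tau(x)\in\mathsf{S}\cdot x$ for all $x$ and $\gamma\circ\Lambda_a=\tau$ for all $a$; [C] for every $X\in\mathfrak{H}$ there is $a$ with $X=\Lambda_a\gamma(X)$;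 [D] $\langle X,Y\rangle\leq\langle\gamma(X),\gamma(Y)\rangle$ for all $X,Y\in\mathfrak{H}$. $\Gamma_0(\mathcal{H})$ is the set of proper lower semicontinuous convex functions $\mathcal{H}\to\left]-\infty,+\infty\right]$; $\partial g(x)=\{u:\langle z-x,u\rangle+g(x)\leq g(z)\ \forall z\}$. A function $g\in\Gamma_0(\mathcal{H})$ is essentially smooth if $\partial g(x)$ contains at most one element for every $x\in\mathcal{H}$; essentially strictly convex if it is strictly convex on every convex subset of $\operatorname{dom}\partial g=\{x:\partial g(x)\neq\varnothing\}$; a Legendre function if it is both. *)

(* Defs.v *)
From HB Require Import structures.
From mathcomp Require Import all_boot all_order all_algebra.
From mathcomp Require Import all_classical all_reals all_analysis.
Set Implicit Arguments. Unset Strict Implicit. Unset Printing Implicit Defensive.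
Import Order.TTheory GRing.Theory Num.Theory.
Import numFieldNormedType.Exports.
Local Open Scope ring_scope.
Local Open Scope classical_set_scope.

(* Euclidean spaces are modelled as row vectors 'rV[R]_n with the standard
   dot product (every Euclidean space is isometrically isomorphic to one). *)
Definition dotv (R : realType) (n : nat) (x y : 'rV[R]_n) : R :=
  \sum_(i < n) x ord0 i * y ord0 i.

Definition is_group (G : Type) (mul : G -> G -> G) (one : G) (inv : G -> G) :=
  [/\ forall a b c, mul a (mul b c) = mul (mul a b) c,
      forall a, mul one a = a, forall a, mul a one = a,
      forall a, mul (inv a) a = one & forall a, mul a (inv a) = one].

Definition linear_isometric_action (R : realType) (n : nat) (G : Type)
  (mul : G -> G -> G) (one : G) (act : G -> 'rV[R]_n -> 'rV[R]_n) :=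
  [/\ forall x, act one x = x,
      forall s t x, act (mul s t) x = act s (act t x),
      forall s (a : R) x y, act s (a *: x + y) = a *: act s x + act s y
    & forall s x, dotv (act s x) (act s x) = dotv x x].

Definition orbit_of (R : realType) (n : nat) (G : Type)
  (act : G -> 'rV[R]_n -> 'rV[R]_n) (x : 'rV[R]_n) : set 'rV[R]_n :=
  [set act s x | s in [set: G]].

Definition S_invariant (R : realType) (n : nat) (G : Type) (T : Type)
  (act : G -> 'rV[R]_n -> 'rV[R]_n) (f : 'rV[R]_n -> T) :=
  forall s x, f (act s x) = f x.

Definition linear_isometry (R : realType) (n m : nat)
  (L : 'rV[R]_n -> 'rV[R]_m) :=
  (forall (a : R) x y, L (a *: x + y) = a *: L x + L y) /\
  (forall x, dotv (L x) (L x) = dotv x x).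

(* Spectral decomposition system (X = 'rV_n, S = (G,act), gamma, Lambda)
   for H = 'rV_m. *)
Definition spectral_decomposition_system (R : realType) (m n : nat)
  (G : Type) (act : G -> 'rV[R]_n -> 'rV[R]_n)
  (gamma : 'rV[R]_m -> 'rV[R]_n) (A : Type)
  (Lambda : A -> 'rV[R]_n -> 'rV[R]_m) :=
  [/\ forall a, linear_isometry (Lambda a),
      (exists tau : 'rV[R]_n -> 'rV[R]_n,
          [/\ S_invariant act tau,
              forall x, orbit_of act x (tau x)
            & forall a x, gamma (Lambda a x) = tau x]),
      (forall X, exists a, X = Lambda a (gamma X))
    & forall X Y, dotv X Y <= dotv (gamma X) (gamma Y)].

Local Open Scope ereal_scope.

Definition proper_fun (R : realType) (n : nat) (f : 'rV[R]_n -> \bar R) :=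
  (forall x, f x != -oo) /\ (exists x, f x < +oo).

Definition convex_fun (R : realType) (n : nat) (f : 'rV[R]_n -> \bar R) :=
  forall (x y : 'rV[R]_n) (t : R), (0 < t < 1)%R ->
    f (t *: x + (1 - t) *: y)%R <= t%:E * f x + (1 - t)%:E * f y.

Definition Gamma0 (R : realType) (n : nat) (f : 'rV[R]_n -> \bar R) :=
  [/\ proper_fun f, lower_semicontinuous f & convex_fun f].

Definition subdiff (R : realType) (n : nat) (g : 'rV[R]_n -> \bar R)
  (x : 'rV[R]_n) : set 'rV[R]_n :=
  [set u | forall z, (dotv (z - x)%R u)%:E + g x <= g z].

Definition dom_subdiff (R : realType) (n : nat) (g : 'rV[R]_n -> \bar R) :
  set 'rV[R]_n := [set x | subdiff g x !=set0].

Definition convex_subset (R : realType) (n : nat) (C : set 'rV[R]_n) :=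
  forall (x y : 'rV[R]_n) (t : R), C x -> C y -> (0 < t < 1)%R -> C (t *: x + (1 - t) *: y)%R.

Definition strictly_convex_on (R : realType) (n : nat)
  (g : 'rV[R]_n -> \bar R) (C : set 'rV[R]_n) :=
  forall (x y : 'rV[R]_n) (t : R), C x -> C y -> x != y -> (0 < t < 1)%R ->
    g (t *: x + (1 - t) *: y)%R < t%:E * g x + (1 - t)%:E * g y.

Definition essentially_smooth (R : realType) (n : nat) (g : 'rV[R]_n -> \bar R) :=
  forall x u v, subdiff g x u -> subdiff g x v -> u = v.

Definition essentially_strictly_convex (R : realType) (n : nat)
  (g : 'rV[R]_n -> \bar R) :=
  forall C, convex_subset C -> C `<=` dom_subdiff g -> strictly_convex_on g C.

Definition legendre (R : realType) (n : nat) (g : 'rV[R]_n -> \bar R) :=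
  essentially_smooth g /\ essentially_strictly_convex g.

(* Main.v *)
Require Import Defs.
From HB Require Import structures.
From mathcomp Require Import all_boot all_order all_algebra.
From mathcomp Require Import all_classical all_reals all_analysis.
From mathcomp Require Import ring lra.
Import numFieldNormedType.Exports.
Set Implicit Arguments. Unset Strict Implicit. Unset Printing Implicit Defensive.
Import Order.TTheory GRing.Theory Num.Theory.
Local Open Scope ring_scope.
Local Open Scope classical_set_scope.

Lemma dotvC (R : realType) n (x y : 'rV[R]_n) : dotv x y = dotv y x.
Proof. by apply: eq_bigr => i _; rewrite mulrC. Qed.

Lemma dotvDZl (R : realType) n (a : R) (x y z : 'rV[R]_n) :
  dotv (a *: x + y) z = a * dotv x z + dotv y z.
Proof.
rewrite /dotv mulr_sumr -big_split; apply: eq_bigr => i _.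
by rewrite !mxE mulrDl mulrA.
Qed.

Lemma dotvDl (R : realType) n (x y z : 'rV[R]_n) :
  dotv (x + y) z = dotv x z + dotv y z.
Proof.
rewrite /dotv -big_split; apply: eq_bigr => i _.
by rewrite !mxE mulrDl.
Qed.

Lemma dotvZl (R : realType) n (a : R) (x z : 'rV[R]_n) :
  dotv (a *: x) z = a * dotv x z.
Proof.
rewrite /dotv mulr_sumr; apply: eq_bigr => i _.
by rewrite !mxE mulrA.
Qed.

Lemma dotvNl (R : realType) n (x z : 'rV[R]_n) : dotv (- x) z = - dotv x z.
Proof. by rewrite -scaleN1r dotvZl mulN1r. Qed.

Lemma dotvBl (R : realType) n (x y z : 'rV[R]_n) :
  dotv (x - y) z = dotv x z - dotv y z.
Proof. by rewrite dotvDl dotvNl. Qed.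

Lemma dotvDr (R : realType) n (x y z : 'rV[R]_n) :
  dotv z (x + y) = dotv z x + dotv z y.
Proof. by rewrite dotvC dotvDl !(dotvC z). Qed.
Lemma dotvZr (R : realType) n (a : R) (x z : 'rV[R]_n) :
  dotv z (a *: x) = a * dotv z x.
Proof. by rewrite dotvC dotvZl dotvC. Qed.
Lemma dotvBr (R : realType) n (x y z : 'rV[R]_n) :
  dotv z (x - y) = dotv z x - dotv z y.
Proof. by rewrite dotvC dotvBl !(dotvC z). Qed.

Lemma dotv_ge0 (R : realType) n (x : 'rV[R]_n) : 0 <= dotv x x.
Proof. by apply: sumr_ge0 => i _; rewrite -expr2 sqr_ge0. Qed.

Lemma dotv_eq0 (R : realType) n (x : 'rV[R]_n) : dotv x x = 0 -> x = 0.
Proof.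
move=> /eqP; rewrite psumr_eq0; last by move=> i _; rewrite -expr2 sqr_ge0.
move=> /allP H; apply/rowP => i; rewrite mxE.
have := H i (mem_index_enum i); rewrite /= -expr2 sqrf_eq0 => /eqP.
by rewrite (ord1 ord0).
Qed.

Lemma polar (R : realType) n k (L : 'rV[R]_n -> 'rV[R]_k) :
  (forall (a : R) x y, L (a *: x + y) = a *: L x + L y) ->
  (forall x, dotv (L x) (L x) = dotv x x) ->
  forall x y, dotv (L x) (L y) = dotv x y.
Proof.
move=> lin iso x y.
have := iso (1 *: x + y); rewrite lin scale1r.
rewrite !scale1r !dotvDl !dotvDr !iso (dotvC (L y)) (dotvC y).
move=> h.
have : 2 * dotv (L x) (L y) = 2 * dotv x y by lra.
by move/(congr1 (fun t => t / 2)); rewrite !(mulrC 2) !mulfK.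
Qed.

Local Open Scope ereal_scope.

Lemma sub_fin (R : realType) n (g : 'rV[R]_n -> \bar R) :
  (forall x, g x != -oo) -> (exists x0, g x0 < +oo) ->
  forall x u, subdiff g x u -> exists r, g x = r%:E.
Proof.
move=> hn [x0 hx0] x u hu; move: (hn x) (hu x0).
case: (g x) => [r| |] // _.
- by move=> _; exists r.
- rewrite addey // => h; have := lt_le_trans hx0 h; by rewrite ltxx.
Qed.

Lemma subdiff_mid (R : realType) n (g : 'rV[R]_n -> \bar R) X U V :
  subdiff g X U -> subdiff g X V -> subdiff g X (2^-1 *: (U + V))%R.
Proof.
move=> hU hV z.
rewrite dotvZr dotvDr.
have [le|le] := lerP (dotv (z - X) U) (dotv (z - X) V).
- apply: le_trans (hV z); apply: leeD2r; rewrite lee_fin; lra.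
- apply: le_trans (hU z); apply: leeD2r; rewrite lee_fin; lra.
Qed.

Lemma mid_le (R : realType) n (g : 'rV[R]_n -> \bar R) p q u (t : R) a b :
  g p = a%:E -> g q = b%:E ->
  subdiff g p u -> subdiff g q u -> (0 < t < 1)%R ->
  t%:E * g p + (1 - t)%:E * g q <= g (t *: p + (1 - t) *: q)%R.
Proof.
move=> ga gb hp hq /andP[t0 t1].
rewrite ga gb -!EFinM -EFinD.
have h1 := hp (t *: p + (1 - t) *: q)%R.
have h2 := hq (t *: p + (1 - t) *: q)%R.
rewrite ga -EFinD in h1; rewrite gb -EFinD in h2.
move: h1 h2; case: (g _) => [r| |] //; rewrite ?leey //.
rewrite !lee_fin !(dotvBl, dotvDl, dotvZl) => h1 h2.
nra.
Qed.

Lemma esc_of (R : realType) n (g : 'rV[R]_n -> \bar R) :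
  (forall x, g x != -oo) -> (exists x0, g x0 < +oo) ->
  (forall x y u (t : R), x != y -> (0 < t < 1)%R -> subdiff g x u -> subdiff g y u ->
     subdiff g (t *: x + (1 - t) *: y)%R u -> False) ->
  essentially_strictly_convex g.
Proof.
move=> hn hf H C Cc Cd x y t Cx Cy xy t01.
set m := (t *: x + (1 - t) *: y)%R.
have [U hU] := Cd m (Cc x y t Cx Cy t01).
have [a ga] : exists a, g x = a%:E.
  by have [v0 hV] := Cd x Cx; exact (sub_fin hn hf hV).
have [b gb] : exists b, g y = b%:E.
  by have [v0 hV] := Cd y Cy; exact (sub_fin hn hf hV).
have [c gc] := sub_fin hn hf hU.
rewrite ga gb gc -!EFinM -EFinD lte_fin ltNge; apply/negP => hle.
move: (t01) => /andP[t0 t1].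
have hx := hU x; have hy := hU y.
rewrite gc -EFinD ga lee_fin in hx; rewrite gc -EFinD gb lee_fin in hy.
move: hx hy; rewrite /m !(dotvBl, dotvDl, dotvZl) => hx hy.
have ea : a = (c + (dotv x U - (t * dotv x U + (1 - t) * dotv y U)))%R by nra.
have eb : b = (c + (dotv y U - (t * dotv x U + (1 - t) * dotv y U)))%R by nra.
apply: (H x y U t xy t01 _ _ hU).
- move=> z; apply: le_trans (hU z); rewrite ga gc -!EFinD lee_fin.
  rewrite ea /m !(dotvBl, dotvDl, dotvZl); lra.
- move=> z; apply: le_trans (hU z); rewrite gb gc -!EFinD lee_fin.
  rewrite eb /m !(dotvBl, dotvDl, dotvZl); lra.
Qed.

Lemma Cu_convex (R : realType) n (g : 'rV[R]_n -> \bar R) u :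
  (forall x, g x != -oo) -> (exists x0, g x0 < +oo) -> convex_fun g ->
  convex_subset [set w | subdiff g w u].
Proof.
move=> hn hf hc w1 w2 t h1 h2 t01 z /=.
have [a1 e1] := sub_fin hn hf h1; have [a2 e2] := sub_fin hn hf h2.
apply: (@le_trans _ _ ((dotv (z - (t *: w1 + (1 - t) *: w2)) u)%:E
                         + (t * a1 + (1 - t) * a2)%:E)).
  by apply: leeD2l; rewrite EFinD !EFinM -e1 -e2; exact: hc.
have k1 := h1 z; have k2 := h2 z; rewrite e1 in k1; rewrite e2 in k2.
move: k1 k2; case: (g z) (hn z) => [r| |] // _; rewrite ?leey //.
rewrite -!EFinD !lee_fin !(dotvBl, dotvDl, dotvZl) => k1 k2.
move: t01 => /andP[t0 t1]; nra.
Qed.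

Lemma esc_noflat (R : realType) n (g : 'rV[R]_n -> \bar R) p q u :
  (forall x, g x != -oo) -> (exists x0, g x0 < +oo) -> convex_fun g ->
  essentially_strictly_convex g -> subdiff g p u -> subdiff g q u -> p = q.
Proof.
move=> hn hf hc he hp hq; apply/eqP/negPn/negP => pq.
have t01 : (0 < (2^-1 : R) < 1)%R by apply/andP; split; lra.
have hsub : [set w | subdiff g w u] `<=` dom_subdiff g by move=> w hw; exists u.
have := he _ (Cu_convex (u:=u) hn hf hc) hsub p q (2^-1)%R hp hq pq t01.
have [a ga] := sub_fin hn hf hp; have [b gb] := sub_fin hn hf hq.
have := mid_le ga gb hp hq t01.
rewrite ga gb -!EFinM -EFinD => h1 h2.
by have := le_lt_trans h1 h2; rewrite ltxx.
Qed.

Lemma dotv0l (R : realType) n (y : 'rV[R]_n) : dotv 0 y = 0%R.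
Proof. by rewrite /dotv big1 // => i _; rewrite mxE mul0r. Qed.

Theorem proposition6p1 (R : realType) (m n : nat)
  (G : Type) (mul : G -> G -> G) (one : G) (inv : G -> G)
  (act : G -> 'rV[R]_n -> 'rV[R]_n)
  (gamma : 'rV[R]_m -> 'rV[R]_n) (A : Type)
  (Lambda : A -> 'rV[R]_n -> 'rV[R]_m)
  (phi : 'rV[R]_n -> \bar R) :
  is_group mul one inv ->
  linear_isometric_action mul one act ->
  spectral_decomposition_system act gamma Lambda ->
  Gamma0 phi -> S_invariant act phi ->
  [/\ essentially_smooth (phi \o gamma) <-> essentially_smooth phi,
      essentially_strictly_convex (phi \o gamma) <-> essentially_strictly_convex phi
    & legendre (phi \o gamma) <-> legendre phi].
Proof.
move=> [_ _ _ hinvl _] [act1 actM actlin actiso].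
move=> [hL [tau [htinv horb hgl]] hC hD] [[hn hf] _ hconv] hinv.
have actdot s x y : dotv (act s x) (act s y) = dotv x y
  by exact: (polar (actlin s) (actiso s)).
have actK s x : act (inv s) (act s x) = x by rewrite -actM hinvl act1.
have Ldot a x y : dotv (Lambda a x) (Lambda a y) = dotv x y
  by exact: (polar (hL a).1 (hL a).2).
have L0 a : Lambda a 0%R = 0%R.
  have := (hL a).1 1%R 0%R 0%R; rewrite !scale1r addr0 => h.
  by apply: (addrI (Lambda a 0%R)); rewrite addr0 -h.
have LZ a c x : Lambda a (c *: x) = c *: Lambda a x.
  by have := (hL a).1 c x 0%R; rewrite !addr0 L0 addr0.
have Lcomb a t x y : Lambda a (t *: x + (1 - t) *: y)%R = (t *: Lambda a x + (1 - t) *: Lambda a y)%R.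
  by rewrite (hL a).1 LZ.
have LB a x y : Lambda a (x - y)%R = (Lambda a x - Lambda a y)%R.
  by have := (hL a).1 (-1)%R y x; rewrite !scaleN1r => h; rewrite addrC h addrC.
have Linj a x y : Lambda a x = Lambda a y -> x = y.
  move=> e; apply/eqP; rewrite -subr_eq0; apply/eqP; apply: dotv_eq0.
  by rewrite -(Ldot a) LB e subrr dotv0l.
have Fphi a x : phi (gamma (Lambda a x)) = phi x.
  by rewrite hgl; have [s _ <-] := horb x; exact: hinv.
have Fn X : dotv (gamma X) (gamma X) = dotv X X.
  by have [a e] := hC X; rewrite [in RHS]e (hL a).2.
have Ffix Z : gamma Z = tau (gamma Z).
  by have [a e] := hC Z; rewrite -(hgl a) -e.
have [a0 _] := hC 0%R.
have hn' : forall X, (phi \o gamma) X != -oo by move=> X; exact: hn.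
have hf' : exists X, (phi \o gamma) X < +oo.
  by have [x0 hx0] := hf; exists (Lambda a0 x0); rewrite /= Fphi.
have LemB x u a : subdiff phi x u -> subdiff (phi \o gamma) (Lambda a x) (Lambda a u).
  move=> hu Z /=; rewrite Fphi.
  have [s1 _ e1] := horb (gamma Z); have [s2 _ e2] := horb u.
  set w' := act (inv s2) (act s1 (gamma Z)).
  have hw' : phi w' = phi (gamma Z) by rewrite /w' !hinv.
  rewrite -hw'; apply: le_trans (hu w'); apply: leeD2r; rewrite lee_fin.
  rewrite !dotvBl Ldot.
  have := hD Z (Lambda a u); rewrite hgl (Ffix Z) -e1 -e2.
  rewrite -(actdot (inv s2)) actK -/w'; lra.
have LemC X U : subdiff (phi \o gamma) X U -> subdiff phi (gamma X) (gamma U).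
  move=> hU z; have [b eb] := hC U.
  have := hU (Lambda b z); rewrite /= Fphi => h; apply: le_trans h; apply: leeD2r.
  rewrite lee_fin !dotvBl.
  have -> : dotv (Lambda b z) U = dotv z (gamma U) by rewrite {1}eb Ldot.
  by have := hD X U; lra.
have P1 : essentially_smooth (phi \o gamma) <-> essentially_smooth phi.
  split.
  - move=> hs x u v hu hv; apply: (Linj a0).
    exact: (hs _ _ _ (LemB _ _ a0 hu) (LemB _ _ a0 hv)).
  - move=> hs X U V hU hV.
    have hW := subdiff_mid hU hV.
    have eUV := hs _ _ _ (LemC _ _ hU) (LemC _ _ hV).
    have eUW := hs _ _ _ (LemC _ _ hU) (LemC _ _ hW).
    have nU := Fn U; have nV := Fn V; have nW := Fn (2^-1 *: (U + V))%R.
    rewrite -eUV in nV; rewrite -eUW in nW.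
    apply/eqP; rewrite -subr_eq0; apply/eqP; apply: dotv_eq0.
    move: nU nV nW; rewrite !(dotvBl, dotvBr, dotvZl, dotvZr, dotvDl, dotvDr).
    rewrite (dotvC V U) => nU nV nW; lra.
have P2 : essentially_strictly_convex (phi \o gamma) <-> essentially_strictly_convex phi.
  split.
  - move=> he; apply: (esc_of hn hf) => x y u t xy t01 hx hy _.
    have hsub : (Lambda a0 @` [set w | subdiff phi w u]) `<=` dom_subdiff (phi \o gamma).
      by move=> _ [w hw <-]; exists (Lambda a0 u); exact: LemB.
    have hcv : convex_subset (Lambda a0 @` [set w | subdiff phi w u]).
      move=> _ _ s [w1 h1 <-] [w2 h2 <-] s01; rewrite -Lcomb.
      by exists (s *: w1 + (1 - s) *: w2)%R => //; exact: (Cu_convex hn hf hconv).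
    have Lxy : Lambda a0 x != Lambda a0 y by apply: contra xy => /eqP /Linj ->.
    have := he _ hcv hsub (Lambda a0 x) (Lambda a0 y) t
       (ex_intro2 _ _ x hx erefl) (ex_intro2 _ _ y hy erefl) Lxy t01.
    rewrite /= -Lcomb !Fphi.
    have [a ga] := sub_fin hn hf hx; have [b gb] := sub_fin hn hf hy.
    have := mid_le ga gb hx hy t01.
    move=> h1 h2; have := le_lt_trans h1 h2; by rewrite ltxx.
  - move=> he; apply: (esc_of hn' hf') => X Y U t XY t01 hX hY hM.
    have e1 := esc_noflat hn hf hconv he (LemC _ _ hX) (LemC _ _ hY).
    have e2 := esc_noflat hn hf hconv he (LemC _ _ hX) (LemC _ _ hM).
    have nX := Fn X; have nY := Fn Y; have nM := Fn (t *: X + (1 - t) *: Y)%R.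
    rewrite -e1 in nY; rewrite -e2 in nM.
    move: (t01) => /andP[t0 t1].
    have D0 : (t * (1 - t) * dotv (X - Y) (X - Y) = 0)%R.
      move: nX nY nM; rewrite !(dotvBl, dotvBr, dotvZl, dotvZr, dotvDl, dotvDr).
      rewrite (dotvC Y X) => nX nY nM; nra.
    have : dotv (X - Y) (X - Y) = 0%R.
      move/eqP: D0; rewrite mulf_eq0 mulf_eq0 => /orP[/orP[|]|/eqP //].
      - by move=> /eqP t00; move: t0; rewrite t00 ltxx.
      - by rewrite subr_eq0 => /eqP t11; move: t1; rewrite -t11 ltxx.
    move/dotv_eq0/eqP; rewrite subr_eq0 => /eqP XY'.
    by move: XY; rewrite XY' eqxx.
split=> //.
by rewrite /legendre P1 P2.
Qed.
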